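(* For every $m\in\mathbb{N}$ and $\boldsymbol{X}\in\mathbb{N}^m$, writing $n_x:=m\widehat{\boldsymbol{\mu}}_m(x)$ for the number of occurrences of $x$ in $\boldsymbol{X}$, $$\hat{\mathfrak{R}}_m(\boldsymbol{X})=\frac1m\sum_{x:\,n_x>0}\frac{1}{2^{n_x}}\left\lceil\frac{n_x}{2}\right\rceil\binom{n_x}{\lceil n_x/2\rceil}.$$
   Context: $\widehat{\boldsymbol{\mu}}_m(i)=\frac1m\sum_{t=1}^m\mathbb{I}\{X_t=i\}$. $\hat{\mathfrak{R}}_m(\boldsymbol{X})=\mathbb{E}_{\boldsymbol{\sigma}}\big[\sup_{f:\mathbb{N}\to\{0,1\}}\frac1m\sum_{t=1}^m\sigma_tf(X_t)\big]$ with $\boldsymbol{\sigma}$ uniform on $\{-1,1\}^m$. *)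

(* Defs.v *)
From HB Require Import structures.
From mathcomp Require Import all_boot all_order all_algebra.
From mathcomp Require Import classical_sets boolp reals.
Set Implicit Arguments. Unset Strict Implicit. Unset Printing Implicit Defensive.
Import Order.TTheory GRing.Theory Num.Theory.
Local Open Scope ring_scope.
Local Open Scope classical_set_scope.

Definition rsign (R : realType) (b : bool) : R := if b then 1 else -1.

Definition rad_corr (R : realType) (m : nat) (X : 'I_m -> nat)
  (sigma : {ffun 'I_m -> bool}) (f : nat -> bool) : R :=
  m%:R^-1 * \sum_(t < m) rsign R (sigma t) * (f (X t))%:R.

(* empirical Rademacher complexity: expectation over uniform sigma in {-1,1}^m
   of the supremum over all f : N -> {0,1} *)
Definition emp_rademacher (R : realType) (m : nat) (X : 'I_m -> nat) : R :=
  (2 ^+ m)^-1 * \sum_(sigma : {ffun 'I_m -> bool})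
      sup [set @rad_corr R m X sigma f | f in [set: nat -> bool]].

Definition occ (m : nat) (X : 'I_m -> nat) (x : nat) : nat :=
  #|[set t : 'I_m | X t == x]|.

(* Main.v *)
Require Import Defs.
From HB Require Import structures.
From mathcomp Require Import all_boot all_order all_algebra.
From mathcomp Require Import classical_sets boolp reals.
From mathcomp Require Import zify.
Import Order.TTheory GRing.Theory Num.Theory.

Lemma tele_step n i : n./2 <= i -> i < n ->
  'C(n, i.+1) * (i.+1.*2 - n) + n * 'C(n.-1, i.+1) = n * 'C(n.-1, i).
Proof.
move=> hi hin.
rewrite mul_bin_down mul_bin_diag.
have h2 := odd_double_half n.
set C := 'C(n, i.+1).
rewrite [_ * C]mulnC [i.+1 * C]mulnC -mulnDr; congr (_ * _).
case: (odd n) h2 => /= h2; lia.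
Qed.

Lemma tele n j u : n./2 <= j -> j <= u -> u <= n ->
  \sum_(j <= i < u) 'C(n, i.+1) * (i.+1.*2 - n) + n * 'C(n.-1, u) = n * 'C(n.-1, j).
Proof.
move=> hj; elim: u => [|u IH] hju hun.
  have -> : j = 0 by lia.
  by rewrite big_geq.
case: (leqP j u) => hju'; last first.
  have -> : j = u.+1 by lia.
  by rewrite big_geq.
rewrite big_nat_recr //= -addnA tele_step; [|lia|lia].
apply: IH; lia.
Qed.

Lemma comb n : \sum_(k < n.+1) 'C(n, k) * (k.*2 - n) = uphalf n * 'C(n, uphalf n).
Proof.
have h2 := odd_double_half n.
rewrite -(big_mkord xpredT (fun k => 'C(n, k) * (k.*2 - n))).
rewrite (big_cat_nat _ (n := (n./2).+1)) //=; last by lia.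
rewrite big1_seq /=; last first.
  move=> k; rewrite mem_index_iota => /andP[_ hk].
  have -> : k.*2 - n = 0 by case: (odd n) h2 => /= h2; lia.
  by rewrite muln0.
rewrite add0n big_add1 /=.
have hn2 : n./2 <= n by rewrite -{2}(odd_double_half n) -addnn addnA leq_addl.
have := @tele n (n./2) n (leqnn _) hn2 (leqnn n).
have -> : n * 'C(n.-1, n) = 0 by case: n {h2 hn2} => // n; rewrite bin_small ?muln0.
rewrite addn0 => ->.
case: n h2 hn2 => [|n] h2 _; first by [].
rewrite uphalf_half.
case Ho: (odd n.+1) h2 => /= h2.
  by rewrite mul_bin_diag add1n mulnC.
rewrite add0n -(bin_sub (n := n) (m := n.+1./2)); last by lia.
have -> : n - n.+1./2 = (n.+1./2).-1 by lia.
rewrite mul_bin_diag.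
have -> : (n.+1./2).-1.+1 = n.+1./2 by lia.
by rewrite mulnC.
Qed.
Local Open Scope ring_scope.

Lemma fiber_card (T : finType) (A C : {set T}) : C \subset A ->
  #|[set B : {set T} | B :&: A == C]| = (2 ^ #|~: A|)%N.
Proof.
move=> CA.
have -> : [set B : {set T} | B :&: A == C] = [set C :|: D | D in powerset (~: A)].
  apply/finset.setP => B; rewrite inE; apply/eqP/imsetP.
    move=> <-; exists (B :&: ~: A); first by rewrite inE finset.subsetIr.
    by rewrite -finset.setIUr finset.setUCr finset.setIT.
  move=> [D]; rewrite inE => DA ->.
  rewrite finset.setIUl (finset.setIidPl CA).
  have -> : D :&: A = finset.set0.
    apply/finset.setP => x; rewrite !inE; apply/negP => /andP[xD xA].
    by move: (fintype.subsetP DA x xD); rewrite inE xA.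
  by rewrite finset.setU0.
rewrite card_in_imset ?card_powerset //.
move=> D1 D2; rewrite !inE => D1A D2A eq12.
have key : forall D : {set T}, D \subset ~: A -> (C :|: D) :&: ~: A = D.
  move=> D DA; rewrite finset.setIUl (finset.setIidPl DA).
  have -> : C :&: ~: A = finset.set0.
    apply/finset.setP => x; rewrite !inE; apply/negP => /andP[xC xA].
    by move: (fintype.subsetP CA x xC); rewrite (negbTE xA).
  by rewrite finset.set0U.
by rewrite -(key _ D1A) eq12 key.
Qed.

Lemma sum_sub_card (T : finType) (A : {set T}) (V : nmodType) (g : nat -> V) :
  \sum_(C in powerset A) g #|C| = \sum_(k < #|A|.+1) g k *+ 'C(#|A|, k).
Proof.
rewrite (partition_big (fun C : {set T} => (inord #|C| : 'I_#|A|.+1)) xpredT) //=.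
apply: eq_bigr => k _.
rewrite -cards_draws -sumr_const.
apply: eq_big => [C|C]; last first.
  rewrite inE => /andP[CA /eqP <-].
  by rewrite inordK // ltnS subset_leq_card.
rewrite !inE; case CA: (C \subset A) => //=.
apply/eqP/eqP => [<-|->]; last by apply: val_inj; rewrite /= inordK.
by rewrite inordK // ltnS subset_leq_card.
Qed.

Lemma count_sets (T : finType) (A : {set T}) (V : nmodType) (g : nat -> V) :
  \sum_(B : {set T}) g #|B :&: A| = (\sum_(k < #|A|.+1) g k *+ 'C(#|A|, k)) *+ 2 ^ #|~: A|.
Proof.
rewrite (partition_big (fun B : {set T} => B :&: A) (mem (powerset A))) /=; last first.
  by move=> B _; rewrite inE finset.subsetIr.
rewrite -sum_sub_card -sumrMnl.
apply: eq_bigr => C; rewrite inE => CA.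
rewrite -(@fiber_card T A C CA) -sumr_const.
apply: eq_big => B; first by rewrite inE.
by move/eqP ->.
Qed.

Lemma aux2 (R : realType) (a b z : R) : b != 0 -> (a * b)^-1 * (z * b) = a^-1 * z.
Proof. by move=> hb; rewrite mulrC -mulf_div divff // mulr1 mulrC. Qed.

Lemma occE m (X : 'I_m -> nat) x : occ X x = #|[set t : 'I_m | X t == x]%SET|.
Proof. apply: eq_card => t. rewrite finset.inE. by apply/idP/idP; rewrite in_setE. Qed.

Section Main.
Variables (R : realType) (m : nat) (X : 'I_m -> nat).

Definition S x (sigma : {ffun 'I_m -> bool}) : R :=
  \sum_(t < m | X t == x) rsign R (sigma t).

Let s := undup [seq X t | t : 'I_m].

Lemma part_sum (F : 'I_m -> R) :
  \sum_(t < m) F t = \sum_(x <- s) \sum_(t < m | X t == x) F t.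
Proof.
under [RHS]eq_bigr => x _ do rewrite big_mkcond.
rewrite exchange_big /=; apply: eq_bigr => t _.
rewrite -big_mkcond /= -big_filter.
have -> : [seq i <- s | X t == i] = filter (pred1 (X t)) s.
  by apply: eq_filter => y /=; rewrite eq_sym.
rewrite filter_pred1_uniq ?undup_uniq ?big_seq1 //.
by rewrite mem_undup fintype.image_f.
Qed.

Lemma rad_corrE sigma f :
  rad_corr R X sigma f = m%:R^-1 * \sum_(x <- s) (f x)%:R * S x sigma.
Proof.
rewrite /rad_corr part_sum; congr (_ * _); apply: eq_bigr => x _.
rewrite /S mulr_sumr; apply: eq_bigr => t /eqP ->.
by rewrite mulrC.
Qed.

Lemma sup_rad sigma :
  sup [set rad_corr R X sigma f | f in [set: nat -> bool]] =
  m%:R^-1 * \sum_(x <- s) Num.max 0 (S x sigma).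
Proof.
set E := (X in sup X).
set a := (X in _ = X).
have Ea : E a.
  exists (fun x => 0 < S x sigma) => //.
  rewrite rad_corrE /a; congr (_ * _); apply: eq_bigr => x _.
  by case: ltrP => h /=; rewrite ?mul1r ?mul0r.
have ub : ubound E a.
  move=> y [f _ <-]; rewrite rad_corrE /a ler_wpM2l ?invr_ge0 ?ler0n //.
  apply: ler_sum => x _; case: (f x) => /=; rewrite ?mul1r ?mul0r le_max lexx ?orbT //.
apply/le_anti/andP; split.
  by apply: ge_sup => //; exists a.
by apply: sup_upper_bound => //; split; [exists a | exists a].
Qed.

Lemma S_set x (B : {set 'I_m}) :
  S x [ffun t => t \in B] =
  (#|B :&: [set t | X t == x]|.*2)%:R - #|[set t | X t == x]|%:R.
Proof.
set A := [set t | X t == x].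
rewrite /S.
have -> : \sum_(t < m | X t == x) rsign R ([ffun t => t \in B] t) =
   \sum_(t in A) (((t \in B)%:R *+ 2) - 1).
  apply: eq_big => t; first by rewrite inE.
  by rewrite ffunE /rsign; case: (t \in B) => _ /=; rewrite ?mul0rn ?sub0r // mulr2n addrK.
rewrite sumrB sumr_const sumrMnl -natr_sum.
have -> : (\sum_(t in A) ((t \in B) : nat))%N = #|B :&: A|.
  rewrite -big_mkcondr /= -sum1_card; apply: eq_bigl => t.
  by rewrite !inE andbC.
by rewrite -muln2 natrM mulr_natr.
Qed.

Lemma max_set x (B : {set 'I_m}) :
  Num.max 0 (S x [ffun t => t \in B]) =
  ((#|B :&: [set t | X t == x]|.*2 - #|[set t | X t == x]|)%N)%:R.
Proof.
rewrite S_set; set k := #|_ :&: _|; set n := #|_|.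
case: (leqP n k.*2) => h.
  by rewrite -natrB // max_r // ler0n.
have -> : (k.*2 - n)%N = 0%N by apply/eqP; rewrite subn_eq0 ltnW.
rewrite max_l //; rewrite subr_le0 ler_nat ltnW //.
Qed.

Lemma exp_x x :
  (2 ^+ m)^-1 * \sum_(sigma : {ffun 'I_m -> bool}) Num.max 0 (S x sigma) =
  (2 ^+ occ X x)^-1 * ((uphalf (occ X x))%:R * ('C(occ X x, uphalf (occ X x)))%:R).
Proof.
rewrite occE; set A := [set t : 'I_m | X t == x].
rewrite (reindex (fun B : {set 'I_m} => [ffun t => t \in B])) /=; last first.
  exists (fun sg : {ffun 'I_m -> bool} => [set t | sg t]) => B _.
    by apply/finset.setP => t; rewrite inE ffunE.
  by apply/ffunP => t; rewrite ffunE inE.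
under eq_bigr => B _ do rewrite max_set.
rewrite (@count_sets _ A R (fun k => ((k.*2 - #|A|)%N)%:R : R)).
have -> : \sum_(k < #|A|.+1) ((k.*2 - #|A|)%N)%:R *+ 'C(#|A|, k) =
   ((uphalf #|A| * 'C(#|A|, uphalf #|A|))%N)%:R :> R.
  rewrite -comb natr_sum; apply: eq_bigr => k _.
  by rewrite -mulr_natr -natrM mulnC.
have hc := cardsC A; rewrite card_ord in hc.
have -> : #|~: A| = (m - #|A|)%N by move: hc; lia.
have hnm : (#|A| <= m)%N by move: hc; lia.
rewrite -[(_ *+ (2 ^ (m - #|A|))%N)]mulr_natr natrX natrM -{1}(subnKC hnm) exprD aux2 // expf_neq0 // pnatr_eq0 //=.

Qed.

End Main.

Theorem lemma4 (R : realType) (m : nat) (X : 'I_m -> nat) :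
  emp_rademacher R X =
  m%:R^-1 * \sum_(x <- undup [seq X t | t : 'I_m] | (0 < occ X x)%N)
     (2 ^+ occ X x)^-1 * ((uphalf (occ X x))%:R * ('C(occ X x, uphalf (occ X x)))%:R).
Proof.
rewrite /emp_rademacher.
under eq_bigr => sigma _ do rewrite (@sup_rad R m X).
rewrite -mulr_sumr mulrCA; congr (_ * _).
rewrite exchange_big /= mulr_sumr.
rewrite [RHS]big_seq_cond [LHS]big_seq.
apply: eq_big => x.
  case xs: (x \in _) => //=; symmetry; move: xs; rewrite mem_undup => /fintype.imageP[t _ ->].
  by rewrite occE; apply/card_gt0P; exists t; rewrite inE.
by move=> _; rewrite -(@exp_x R m X).
Qed.
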